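(* ${\bf Forb}(\Gamma_{\leq 1})=\{P_3\}$, where $P_3$ is the path on three vertices.
   Context: For a finite graph $G$ and indeterminates $X_G=\{x_u : u\in V(G)\}$, the generalized Laplacian matrix $L(G,X_G)$ is the $V(G)\times V(G)$ matrix over $\mathbb{Z}[X_G]$ with $(u,u)$-entry $x_u$ and $(u,v)$-entry $-m_{uv}$ for $u\ne v$, $m_{uv}$ being the number of edges between $u$ and $v$. The $i$-th critical ideal $I_i(G,X_G)$ is the ideal of $\mathbb{Z}[X_G]$ generated by all $i\times i$ minors of $L(G,X_G)$ (with $I_i=\langle1\rangle$ for $i<1$, $I_i=\langle 0\rangle$ for $i>|V(G)|$). The algebraic co-rank $\gamma(G)$ is the number of critical ideals of $G$ equal to $\langle 1\rangle$. $\Gamma_{\le k}$ is the set of simple connected graphs $G$ with $\gamma(G)\le k$. A graph $G$ is forbidden for $\Gamma_{\le k}$ if $\gamma(G)\ge k+1$; ${\bf Forb}(\Gamma_{\le k})$ is the set of minimal (with respect to taking induced subgraphs) simple connected forbidden graphs for $\Gamma_{\le k}$; equivalently, the simple connected graphs $G$ with $\gamma(G)=k+1$ such that $\gamma(G\setminus v)<\gamma(G)$ for every vertex $v$ of $G$. *)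

(* Defs.v *)
From HB Require Import structures.
From mathcomp Require Import all_boot all_order all_algebra.
From mathcomp Require Import mpoly.
From Stdlib Require Import ClassicalEpsilon.

Set Implicit Arguments.
Unset Strict Implicit.
Unset Printing Implicit Defensive.

Import GRing.Theory.
Local Open Scope ring_scope.

Definition simple_graph (V : finType) (e : rel V) : Prop :=
  ssrbool.symmetric e /\ ssrbool.irreflexive e.

Definition connected_graph (V : finType) (e : rel V) : Prop :=
  forall u w : V, connect e u w.

(* The ring Z[X_G]: variables indexed by the vertices, via enum_rank. *)
Notation polyring V := {mpoly int[#|V|]}.

Definition gen_laplacian (V : finType) (e : rel V) : 'M[polyring V]_#|V| :=
  \matrix_(i, j) (if i == j then 'X_i
                  else - ((e (enum_val i) (enum_val j) : nat)%:R)).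

(* strictly increasing index maps = choice of a k-subset of rows/columns *)
Definition incr_idx (k m : nat) (f : {ffun 'I_k -> 'I_m}) : bool :=
  [forall i : 'I_k, forall j : 'I_k, (i < j)%N ==> (f i < f j)%N].

Definition minor (R : comNzRingType) (m k : nat) (A : 'M[R]_m)
  (f g : {ffun 'I_k -> 'I_m}) : R := \det (mxsub f g A).

(* The ideal generated by all k x k minors of A is the unit ideal <1>:
   1 is a linear combination of these minors with polynomial coefficients. *)
Definition minors_ideal_one (R : comNzRingType) (m k : nat) (A : 'M[R]_m) : Prop :=
  exists c : {ffun 'I_k -> 'I_m} -> {ffun 'I_k -> 'I_m} -> R,
    \sum_(f | incr_idx f) \sum_(g | incr_idx g) c f g * minor A f g = 1.

Definition critical_ideal_trivial (V : finType) (e : rel V) (k : nat) : Prop :=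
  minors_ideal_one k (gen_laplacian e).

Definition pbool (P : Prop) : bool :=
  if excluded_middle_informative P then true else false.

(* algebraic co-rank: number of i in 1..|V| with I_i(G,X_G) = <1>
   (I_i = <1> trivially for i < 1, I_i = <0> for i > |V|). *)
Definition gamma (V : finType) (e : rel V) : nat :=
  (\sum_(1 <= i < #|V|.+1) pbool (critical_ideal_trivial e i))%N.

Definition del_vertex (V : finType) (e : rel V) (v : V) : rel {u : V | u != v} :=
  fun a b => e (val a) (val b).
Arguments del_vertex {V} e v.

Definition forb_gamma_le (k : nat) (V : finType) (e : rel V) : Prop :=
  simple_graph e /\ connected_graph e /\ gamma e = k.+1 /\
  forall v : V, (gamma (del_vertex e v) < gamma e)%N.

Definition P3 : rel 'I_3 := fun i j => (i.+1 == j :> nat) || (j.+1 == i :> nat).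

Definition graph_iso (V W : finType) (e : rel V) (d : rel W) : Prop :=
  exists f : V -> W, bijective f /\ forall u w, e u w = d (f u) (f w).

(* Main.v *)
Require Import Defs.
From mathcomp Require Import all_boot all_order all_algebra.
From mathcomp Require Import mpoly.
From mathcomp Require Import ring.
From Stdlib Require Import ClassicalEpsilon.

Set Implicit Arguments.
Unset Strict Implicit.
Unset Printing Implicit Defensive.
Import GRing.Theory.
Local Open Scope ring_scope.

Lemma pboolT (P : Prop) : P -> pbool P = true.
Proof. by rewrite /pbool; case: excluded_middle_informative. Qed.
Lemma pboolF (P : Prop) : ~ P -> pbool P = false.
Proof. by rewrite /pbool; case: excluded_middle_informative. Qed.

Lemma L_entry (V : finType) (e : rel V) (u w : V) :
  gen_laplacian e (enum_rank u) (enum_rank w) =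
  if u == w then 'X_(enum_rank u) else - ((e u w : nat)%:R).
Proof. by rewrite mxE !enum_rankK (inj_eq enum_rank_inj). Qed.

Lemma det2 (R : comNzRingType) (A : 'M[R]_2) :
  \det A = A 0 0 * A 1 1 - A 0 1 * A 1 0.
Proof.
rewrite (expand_det_row _ 0) big_ord_recr /= big_ord_recr /= big_ord0 add0r.
rewrite /cofactor !det_mx11 !mxE /=.
rewrite [widen_ord _ _](_ : _ = 0); last by apply/val_inj.
rewrite [lift _ _](_ : _ = 1); last by apply/val_inj.
rewrite [lift _ _](_ : _ = 0); last by apply/val_inj.
rewrite [ord_max](_ : _ = 1); last by apply/val_inj.
rewrite expr0 expr1; ring.
Qed.

Definition evL (V : finType) (e : rel V) (t : int) :=
  map_mx (meval (fun _ : 'I_#|V| => t)) (gen_laplacian e).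

Lemma evL_entry (V : finType) (e : rel V) t i j :
  evL e t i j = if i == j then t else - ((e (enum_val i) (enum_val j) : nat)%:R).
Proof.
rewrite /evL !mxE; case: eqP => _; first by rewrite mevalXU.
by rewrite mevalN; case: (e _ _) => /=; rewrite ?meval1 ?meval0.
Qed.

Lemma nontriv (V : finType) (e : rel V) (k : nat) (t : int) :
  (forall f : {ffun 'I_k -> 'I_#|V|}, incr_idx f ->
     exists i1 i2, i1 != i2 /\ forall j, evL e t (f i1) j = evL e t (f i2) j) ->
  ~ critical_ideal_trivial e k.
Proof.
move=> H [c Hc].
have := congr1 (meval (fun _ : 'I_#|V| => t)) Hc.
rewrite meval1 rmorph_sum /= big1 //.
move=> f Hf; rewrite rmorph_sum /= big1 // => g _.
rewrite rmorphM /= /minor -det_map_mx /= map_mxsub.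
have [i1 [i2 [Hne Heq]]] := H f Hf.
rewrite (@determinant_alternate _ _ _ i1 i2 Hne) ?mulr0 //.
move=> j; rewrite /mxsub mxE [in RHS]mxE; exact: (Heq (g j)).
Qed.

Lemma sum_delta (T : finType) (R : comNzRingType) (P : pred T) (x0 : T) (F : T -> R) :
  P x0 -> \sum_(x | P x) (if x == x0 then F x else 0) = F x0.
Proof.
move=> H; rewrite (bigD1 x0) //= eqxx big1 ?addr0 // => x /andP[_ /negbTE ->] //.
Qed.

Lemma triv_of (V : finType) (e : rel V) (k : nat) (f0 g0 : {ffun 'I_k -> 'I_#|V|}) :
  incr_idx f0 -> incr_idx g0 -> minor (gen_laplacian e) f0 g0 ^+ 2 = 1 ->
  critical_ideal_trivial e k.
Proof.
move=> Hf Hg H2.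
rewrite /critical_ideal_trivial /minors_ideal_one.
pose M := minor (gen_laplacian e) f0 g0.
exists (fun f g : {ffun 'I_k -> 'I_#|V|} => if (f == f0) && (g == g0) then M else 0).
rewrite -H2 expr2.
rewrite (eq_bigr (fun f => if f == f0 then M * minor (gen_laplacian e) f g0 else 0)).
  by rewrite (@sum_delta _ _ _ f0 (fun f => M * minor (gen_laplacian e) f g0) Hf).
move=> f _.
rewrite (eq_bigr (fun g => if g == g0 then
   (if f == f0 then M * minor (gen_laplacian e) f g else 0) else 0)).
  rewrite (@sum_delta _ _ _ g0 (fun g => if f == f0 then M * minor (gen_laplacian e) f g else 0) Hg) //.
move=> g _; case: (g == g0); case: (f == f0); by rewrite /= ?mul0r.
Qed.

Definition pair_idx (n : nat) (x y : 'I_n) : {ffun 'I_2 -> 'I_n} :=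
  [ffun i : 'I_2 => if (val i == 0%N) == (x < y)%N then x else y].

Lemma pair_idx_incr n (x y : 'I_n) : x != y -> incr_idx (pair_idx x y).
Proof.
move=> Hxy; apply/forallP => i; apply/forallP => j; apply/implyP.
case: i => [[|[|//]] ?] //; case: j => [[|[|//]] ?] // _.
rewrite !ffunE /=.
case: (ltngtP x y) => //= H; move: Hxy; by rewrite (val_inj H) eqxx.
Qed.

Lemma p3_triv (W : finType) (d : rel W) (a b c : W) :
  d a b -> d b c -> ~~ d a c -> a != b -> b != c -> a != c ->
  critical_ideal_trivial d 1 /\ critical_ideal_trivial d 2.
Proof.
move=> Hab Hbc Hac nab nbc nac; split.
  apply: (@triv_of _ _ _ [ffun _ => enum_rank a] [ffun _ => enum_rank b]).
  - by apply/forallP => -[[|//] ?]; apply/forallP => -[[|//] ?].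
  - by apply/forallP => -[[|//] ?]; apply/forallP => -[[|//] ?].
  rewrite /minor det_mx11 /mxsub mxE !ffunE L_entry (negbTE nab) Hab.
  by rewrite expr2 mulrNN mulr1.
have ra : enum_rank a != enum_rank b by rewrite (inj_eq enum_rank_inj).
have rb : enum_rank b != enum_rank c by rewrite (inj_eq enum_rank_inj).
apply: (@triv_of _ _ _ (pair_idx (enum_rank a) (enum_rank b))
                       (pair_idx (enum_rank b) (enum_rank c))).
- exact: pair_idx_incr.
- exact: pair_idx_incr.
rewrite /minor det2 /mxsub !mxE !ffunE /=.
case: (enum_rank a < enum_rank b)%N; case: (enum_rank b < enum_rank c)%N;
  rewrite /= ?(inj_eq enum_rank_inj) !enum_rankK eqxx (negbTE nab) (negbTE nbc) (negbTE nac) Hab Hbc (negbTE Hac) /=;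
  by rewrite !oppr0 ?mul0r ?mulr0 ?mulrNN ?mulr1 ?subr0 ?sub0r expr2 ?mulrNN mulr1.
Qed.

Lemma evL0_entry (V : finType) (e : rel V) i j : irreflexive e ->
  evL e 0 i j = - ((e (enum_val i) (enum_val j) : nat)%:R).
Proof. by move=> Hirr; rewrite evL_entry; case: eqP => // <-; rewrite Hirr oppr0. Qed.

Lemma incr_inj k n (f : {ffun 'I_k -> 'I_n}) : incr_idx f -> injective f.
Proof.
move=> Hf i j Hij.
have H : forall i j : 'I_k, (i < j)%N -> (f i < f j)%N.
  by move=> x y Hxy; move/forallP: Hf => /(_ x) /forallP /(_ y) /implyP; apply.
case: (ltngtP i j) => Hc; last exact: val_inj.
- by move: (H _ _ Hc); rewrite Hij ltnn.
- by move: (H _ _ Hc); rewrite Hij ltnn.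
Qed.

Lemma twins_nontriv (V : finType) (e : rel V) (u w : V) (k : nat) :
  k = #|V| -> irreflexive e -> u != w -> (forall z, e u z = e w z) ->
  ~ critical_ideal_trivial e k.
Proof.
move=> -> Hirr Huw Htw; apply: (@nontriv _ _ _ 0) => f Hf.
have inj := incr_inj Hf.
have onto : forall y, y \in codom f by move=> y; apply: (inj_card_onto inj); rewrite !card_ord.
have /codomP [i1 E1] := onto (enum_rank u).
have /codomP [i2 E2] := onto (enum_rank w).
exists i1, i2; split.
  apply/eqP => E; move: Huw; by rewrite -(enum_rankK u) -(enum_rankK w) E1 E2 E eqxx.
by move=> j; rewrite !evL0_entry // -E1 -E2 !enum_rankK Htw.
Qed.

Lemma complete_nontriv (V : finType) (e : rel V) (k : nat) :
  (2 <= k)%N -> (forall u w, u != w -> e u w) -> ~ critical_ideal_trivial e k.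
Proof.
move=> Hk Hc; apply: (@nontriv _ _ _ (-1)) => f Hf.
have h0 : (0 < k)%N by apply: leq_trans Hk.
have h1 : (1 < k)%N by [].
exists (Ordinal h0), (Ordinal h1); split => //.
have all1 : forall i j, evL e (-1) i j = -1.
  move=> i j; rewrite evL_entry; case: eqP => // Hij.
  rewrite Hc //; apply/eqP => E; apply: Hij; exact: (can_inj enum_valK E).
by move=> j; rewrite !all1.
Qed.

Lemma gamma_ge2 (W : finType) (d : rel W) :
  (2 <= #|W|)%N -> critical_ideal_trivial d 1 -> critical_ideal_trivial d 2 ->
  (2 <= gamma d)%N.
Proof.
move=> Hn H1 H2; rewrite /gamma big_ltn ?ltnS ?(leq_trans _ Hn) //.
rewrite big_ltn ?ltnS // (pboolT H1) (pboolT H2).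
by rewrite addnA leq_addr.
Qed.

Lemma gamma_le1 (W : finType) (d : rel W) :
  (forall k, (2 <= k <= #|W|)%N -> ~ critical_ideal_trivial d k) ->
  (gamma d <= 1)%N.
Proof.
move=> H; rewrite /gamma.
case: (posnP #|W|) => [->|Hp]; first by rewrite big_geq.
rewrite big_ltn ?ltnS // big_nat_cond big1 ?addn0; first by case: pbool.
move=> i /andP[/andP[Hi1 Hi2] _]; rewrite pboolF //; apply: H.
by rewrite Hi1 -ltnS Hi2.
Qed.

Lemma find_p3 (V : finType) (e : rel V) (u w : V) :
  connect e u w -> u != w -> ~~ e u w ->
  exists a b c, [/\ e a b, e b c, ~~ e a c & a != c].
Proof.
move/connectP => [p Hp ->] {w}.
elim: p u Hp => [|y p IH] x /=; first by rewrite eqxx.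
move=> /andP[Hxy Hp] Hne Hnot.
have [Hyl|Hyl] := boolP (e y (last y p)).
  by exists x, y, (last y p); split.
apply: (IH y Hp _ Hyl); apply/eqP => E.
by move: Hnot; rewrite -E Hxy.
Qed.

Lemma card_ge2 (W : finType) (x y : W) : x != y -> (2 <= #|W|)%N.
Proof. by move=> H; apply: leq_trans (max_card [set x; y]); rewrite cards2 H. Qed.

Definition o0 : 'I_3 := @Ordinal 3 0 isT.
Definition o1 : 'I_3 := @Ordinal 3 1 isT.
Definition o2 : 'I_3 := @Ordinal 3 2 isT.

Lemma ord3_cases (i : 'I_3) : [|| i == o0, i == o1 | i == o2].
Proof. by case: i => [[|[|[|//]]] Hi]. Qed.

Lemma forward (V : finType) (e : rel V) :
  simple_graph e -> forb_gamma_le 1 e -> graph_iso e P3.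
Proof.
move=> [Hsym Hirr] [_ [Hconn [Hg Hdel]]].
have [u [w [Huw Hnuw]]] : exists u w, u != w /\ ~~ e u w.
  case: (boolP [exists u, exists w, (u != w) && ~~ e u w]).
    by move=> /existsP[u /existsP[w /andP[H1 H2]]]; exists u, w.
  move=> Hn; exfalso.
  have Hc : forall u w, u != w -> e u w.
    move=> u w Huw; apply: contraNT Hn => Hnot.
    by apply/existsP; exists u; apply/existsP; exists w; rewrite Huw Hnot.
  have := @gamma_le1 _ e (fun k Hk => complete_nontriv (proj1 (andP Hk)) Hc).
  by rewrite Hg.
have [a [b [c [Hab Hbc Hac nac]]]] := find_p3 (Hconn u w) Huw Hnuw.
have nab : a != b by apply/eqP => E; move: Hab; rewrite E Hirr.
have nbc : b != c by apply/eqP => E; move: Hbc; rewrite E Hirr.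
have Hall : forall v, [|| v == a, v == b | v == c].
  move=> v; apply/negPn/negP; rewrite !negb_or => /and3P[va vb vc].
  have := Hdel v; rewrite Hg ltnNge => /negP; apply.
  have av : a != v by rewrite eq_sym.
  pose a' : {x : V | x != v} := exist _ a av.
  have bv : b != v by rewrite eq_sym.
  pose b' : {x : V | x != v} := exist _ b bv.
  have cv : c != v by rewrite eq_sym.
  pose c' : {x : V | x != v} := exist _ c cv.
  have nab' : a' != b' by [].
  have nbc' : b' != c' by [].
  have nac' : a' != c' by [].
  have [H1 H2] := @p3_triv _ (del_vertex e v) a' b' c' Hab Hbc Hac nab' nbc' nac'.
  exact: gamma_ge2 (card_ge2 nac') H1 H2.
have nba : (b == a) = false by rewrite eq_sym (negbTE nab).
have nca : (c == a) = false by rewrite eq_sym (negbTE nac).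
have ncb : (c == b) = false by rewrite eq_sym (negbTE nbc).
have Hba : e b a by rewrite Hsym.
have Hcb : e c b by rewrite Hsym.
have Hca : e c a = false by rewrite Hsym (negbTE Hac).
exists (fun v => if v == a then o0 else if v == b then o1 else o2); split.
  exists (fun i : 'I_3 => if val i == 0%N then a else if val i == 1%N then b else c).
    move=> v; case/or3P: (Hall v) => /eqP ->;
      by rewrite ?eqxx ?nba ?nca ?ncb.
  move=> i; case/or3P: (ord3_cases i) => /eqP -> /=;
    by rewrite ?eqxx ?nba ?nca ?ncb.
move=> x y; case/or3P: (Hall x) => /eqP ->; case/or3P: (Hall y) => /eqP ->;
  by rewrite ?eqxx ?nba ?nca ?ncb ?Hirr ?Hab ?Hba ?Hbc ?Hcb ?Hca ?(negbTE Hac).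
Qed.

Lemma backward (V : finType) (e : rel V) :
  simple_graph e -> graph_iso e P3 -> forb_gamma_le 1 e.
Proof.
move=> [Hsym Hirr] [f [[g fK gK] Hf]].
pose a := g o0. pose b := g o1. pose c := g o2.
have Hab : e a b by rewrite Hf /a /b !gK.
have Hbc : e b c by rewrite Hf /b /c !gK.
have Hac : e a c = false by rewrite Hf /a /c !gK.
have Hba : e b a by rewrite Hsym.
have Hcb : e c b by rewrite Hsym.
have Hca : e c a = false by rewrite Hsym.
have nab : a != b by apply/eqP => E; move: Hab; rewrite E Hirr.
have nbc : b != c by apply/eqP => E; move: Hbc; rewrite E Hirr.
have nac : a != c by apply/eqP => E; move: (congr1 f E); rewrite /a /c !gK.
have nba : (b == a) = false by rewrite eq_sym (negbTE nab).
have nca : (c == a) = false by rewrite eq_sym (negbTE nac).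
have ncb : (c == b) = false by rewrite eq_sym (negbTE nbc).
have Hall : forall v, [|| v == a, v == b | v == c].
  by move=> v; rewrite -(fK v) /a /b /c !(can_eq gK); apply: ord3_cases.
have cardV : #|V| = 3%N by rewrite (bij_eq_card (f:=f)) ?card_ord //; exists g.
have tw : forall z, e a z = e c z.
  by move=> z; case/or3P: (Hall z) => /eqP ->; rewrite ?Hirr ?Hca ?Hac ?Hab ?Hcb.
have [H1 H2] := p3_triv Hab Hbc (negbT Hac) nab nbc nac.
have Hg : gamma e = 2%N.
  rewrite /gamma cardV big_ltn // big_ltn // big_ltn // big_geq // (pboolT H1) (pboolT H2).
  by rewrite (pboolF (twins_nontriv (esym cardV) Hirr nac tw)).
split; first by split.
split.
  have Hb : forall v, connect e v b.
    move=> v; case/or3P: (Hall v) => /eqP ->; by rewrite ?connect0 ?connect1.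
  move=> u w; apply: connect_trans (Hb u) _.
  by rewrite (sym_connect_sym Hsym).
split; first by [].
move=> v; rewrite Hg ltnS; apply: gamma_le1 => k /andP[Hk1 Hk2].
have cW : #|{: {x : V | x != v}}| = 2%N by rewrite card_sig cardC1 cardV.
have Hk : k = 2%N by apply/eqP; rewrite eqn_leq Hk1 andbT -cW.
case/or3P: (Hall v) => /eqP Hv.
- apply: complete_nontriv; first by rewrite Hk.
  move=> [x Hx] [y Hy] Hxy; rewrite /del_vertex /=.
  have Hxy' : x != y by apply: contraNneq Hxy => E; apply/eqP/val_inj.
  clear Hxy; move: Hx Hy Hxy'; rewrite Hv.
  case/or3P: (Hall x) => /eqP ->; case/or3P: (Hall y) => /eqP ->;
    by rewrite ?eqxx ?nba ?nca ?ncb.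
- have av : a != v by rewrite Hv.
  have cv : c != v by rewrite Hv eq_sym.
  apply: (@twins_nontriv _ _ (exist _ a av) (exist _ c cv)).
  + by rewrite Hk cW.
  + by move=> x; apply: Hirr.
  + by [].
  + by move=> z; rewrite /del_vertex /= tw.
- apply: complete_nontriv; first by rewrite Hk.
  move=> [x Hx] [y Hy] Hxy; rewrite /del_vertex /=.
  have Hxy' : x != y by apply: contraNneq Hxy => E; apply/eqP/val_inj.
  clear Hxy; move: Hx Hy Hxy'; rewrite Hv.
  case/or3P: (Hall x) => /eqP ->; case/or3P: (Hall y) => /eqP ->;
    by rewrite ?eqxx ?nba ?nca ?ncb.
Qed.

Theorem corollary3p5 (V : finType) (e : rel V) :
  simple_graph e -> (forb_gamma_le 1 e <-> graph_iso e P3).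
Proof. by move=> Hs; split; [apply: forward | apply: backward]. Qed.
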